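(* Assume the standing assumptions, fix a function $h$ satisfying (h1)–(h4), and let $\sigma$ be a stopping time (with respect to an admissible filtration) with $\mathbf E\sigma<\infty$. Then $$\lim_{x\to\infty}\frac{\mathbf P(A_{\sigma,1}(x))}{\overline F(x)}=\mathbf E\sigma.$$
   Context: Standing assumptions: $\{\xi_n\}_{n\ge1}$ are i.i.d. real random variables with common distribution function $F$ and finite mean $\mathbf E\xi_1=-m<0$. $F$ is long-tailed: $\overline F(x)=1-F(x)>0$ for all $x$, and $\overline F(x-c)/\overline F(x)\to1$ as $x\to\infty$ for every fixed $c>0$. Notation: $S_0=0$ and $S_n=\sum_{i=1}^n\xi_i$. Admissible filtration: a stopping time $\sigma$ is taken with respect to a filtration $\{\mathcal F_n\}_{n\ge0}$ such that $\xi_n$ is $\mathcal F_n$-measurable and $\xi_{n+1}$ is independent of $\mathcal F_n$. The function $h:\mathbb R_+\to\mathbb R_+$ satisfies: - (h1) $h(x)\le x/2$ for all $x$; - (h2) $h(x)\to\infty$; - (h3) $\overline F(x-h(x))/\overline F(x)\to1$ as $x\to\infty$; - (h4) there exists $x_0$ with $h(x+t)\le h(x)+t$ for all $x\ge x_0$, $t\ge0$. For $x\ge0$, let $\mu(x)=\min\{n:S_n>x\}$, with $\min\emptyset=\infty$. Define $$A_{\sigma,1}(x)=\{\mu(x)\le\sigma,\ S_{\mu(x)-1}\le h(x)\}.$$ *)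

(* Defs.v *)
From HB Require Import structures.
From mathcomp Require Import all_boot all_order all_algebra.
From mathcomp Require Import all_classical all_reals all_analysis.
Set Implicit Arguments. Unset Strict Implicit. Unset Printing Implicit Defensive.
Import Order.TTheory GRing.Theory Num.Theory.
Import numFieldNormedType.Exports.
Local Open Scope classical_set_scope.
Local Open Scope ring_scope.

Section Defs.
Context {d : measure_display} {T : measurableType d} {R : realType}.
Variable P : probability T R.

(* The random walk: xi n is xi_n for n >= 1 (xi 0 is ignored); S 0 = 0. *)
Definition S (xi : nat -> T -> R) (n : nat) (t : T) : R :=
  \sum_(i < n) xi i.+1 t.

Definition common_cdf (xi : nat -> T -> R) (F : R -> R) : Prop :=
  forall n x, (0 < n)%N -> P [set t | xi n t <= x] = (F x)%:E.

Definition mutually_independent (xi : nat -> T -> R) : Prop :=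
  forall (n : nat) (B : nat -> set R), (forall i, measurable (B i)) ->
    P (\bigcap_(i in `I_n) (xi i.+1 @^-1` B i)) =
    (\prod_(i < n) P (xi i.+1 @^-1` B i))%E.

Definition filtration (G : nat -> set (set T)) : Prop :=
  (forall n, sigma_algebra setT (G n)) /\
  (forall n, G n `<=` measurable) /\
  (forall n m, (n <= m)%N -> G n `<=` G m).

Definition admissible (xi : nat -> T -> R) (G : nat -> set (set T)) : Prop :=
  filtration G /\
  (forall n (B : set R), (0 < n)%N -> measurable B -> G n (xi n @^-1` B)) /\
  (forall n A (B : set R), G n A -> measurable B ->
     P (A `&` (xi n.+1 @^-1` B)) = (P A * P (xi n.+1 @^-1` B))%E).

(* Stopping time with values in N u {oo}; None encodes oo. *)
Definition stopping_time (G : nat -> set (set T)) (sigma : T -> option nat) : Prop :=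
  forall n, G n [set t | sigma t = Some n].

Definition ext_time (sigma : T -> option nat) (t : T) : \bar R :=
  match sigma t with Some n => (n%:R)%:E | None => +oo%E end.

Definition le_time (n : nat) (sigma : T -> option nat) (t : T) : Prop :=
  match sigma t with Some k => (n <= k)%N | None => True end.

(* A_{sigma,1}(x) = { mu(x) <= sigma, S_{mu(x)-1} <= h(x) } where
   mu(x) = min{n : S_n > x}; "mu(x) = n" is written out literally. *)
Definition A_sigma1 (xi : nat -> T -> R) (sigma : T -> option nat)
    (h : R -> R) (x : R) : set T :=
  [set t | exists n : nat,
      (S xi n t > x /\ forall k, (k < n)%N -> S xi k t <= x) /\
      le_time n sigma t /\ S xi n.-1 t <= h x].

End Defs.

(* Main.v *)
Require Import Defs.
From HB Require Import structures.
From mathcomp Require Import all_boot all_order all_algebra.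
From mathcomp Require Import all_classical all_reals all_analysis.
From mathcomp Require Import zify ring lra.
From Stdlib Require Import Lia.
Import Order.TTheory GRing.Theory Num.Theory.
Import numFieldNormedType.Exports.
Local Open Scope classical_set_scope.
Local Open Scope ring_scope.

Lemma mle d' (U : measurableType d') (R : realType) (f : U -> R) a :
  measurable_fun setT f -> measurable [set t | f t <= a].
Proof.
move=> mf; have := mf measurableT _ (measurable_itv `]-oo, a]); rewrite setTI.
congr measurable; apply/seteqP; split => t /=; by rewrite in_itv /=.
Qed.
Lemma mlt d' (U : measurableType d') (R : realType) (f : U -> R) a :
  measurable_fun setT f -> measurable [set t | a < f t].
Proof.
move=> mf; have := mf measurableT _ (measurable_itv `]a, +oo[); rewrite setTI.
congr measurable; apply/seteqP; split => t /=; by rewrite in_itv /= andbT.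
Qed.

Lemma shift_cvg (R : realType) (g : R -> R) (a l : R) :
  g y @[y --> +oo] --> l -> g (x + a) @[x --> +oo] --> l.
Proof.
move=> Hg.
have Hs : (x + a) @[x --> +oo] --> +oo.
  apply/cvgryPge => A; near=> x; rewrite -lerBlDr; near: x.
  by apply: nbhs_pinfty_ge; exact: num_real.
exact: (cvg_comp _ _ Hs Hg).
Unshelve. all: by end_near.
Qed.

Section S.
Context d (T : measurableType d) (R : realType) (P : probability T R)
  (xi : nat -> T -> R) (F : R -> R) (G : nat -> set (set T)) (sigma : T -> option nat).
Hypothesis cdf : common_cdf P xi F.
Hypothesis adm : admissible P xi G.
Hypothesis st : stopping_time G sigma.

Let Gsa n : sigma_algebra setT (G n). Proof. by case: adm => [[]]. Qed.
Let Gsub n : G n `<=` measurable. Proof. by case: adm => [[_ [H _]] _]; exact: H. Qed.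
Let Gmono n m : (n <= m)%N -> G n `<=` G m. Proof. by case: adm => [[_ [_ H]] _]; exact: H. Qed.
Let Gxi n B : (0 < n)%N -> measurable B -> G n (xi n @^-1` B).
Proof. by case: adm => _ [H _]; exact: H. Qed.
Let indep n A B : G n A -> measurable B ->
     P (A `&` (xi n.+1 @^-1` B)) = (P A * P (xi n.+1 @^-1` B))%E.
Proof. by case: adm => _ [_ H]; exact: H. Qed.

Definition Gt n := g_sigma_algebraType (G n).
Lemma GE n : G n = (measurable : set (set (Gt n))).
Proof. by rewrite measurable_g_measurableTypeE. Qed.

Lemma xi_Gmeas n k : (0 < k <= n)%N -> measurable_fun [set: Gt n] (xi k).
Proof.
move=> /andP[k0 kn] _ B mB; rewrite setTI -GE. exact: (Gmono _ _ kn _ (Gxi _ _ k0 mB)).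
Qed.

Lemma S_Gmeas n k : (k <= n)%N -> measurable_fun [set: Gt n] (S xi k).
Proof.
move=> kn; rewrite /S; apply: measurable_sum => i; apply: xi_Gmeas.
by rewrite /= (leq_trans _ kn).
Qed.

Lemma xi_meas k : (0 < k)%N -> measurable_fun [set: T] (xi k).
Proof. by move=> k0 _ B mB; rewrite setTI; exact: (Gsub _ _ (Gxi _ _ k0 mB)). Qed.

Lemma S_meas k : measurable_fun [set: T] (S xi k).
Proof. by rewrite /S; apply: measurable_sum => i; apply: xi_meas. Qed.

Definition Lt n := [set t | le_time n sigma t].

Lemma Lt_G n : G n (Lt n.+1).
Proof.
rewrite GE.
have -> : Lt n.+1 = ~` \bigcup_k [set t | sigma t = Some k /\ (k <= n)%N].
  apply/seteqP; split => t /=.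
    move=> Ht [k _ [e kn]]; move: Ht; rewrite /Lt /le_time /= e; lia.
  rewrite /Lt /le_time /=; case E: (sigma t) => [j|] // H.
  rewrite ltnNge; apply/negP => jn; apply: H; exists j => //.
apply: measurableC; apply: bigcup_measurable => k _.
case: (leqP k n) => kn.
  have -> : [set t : Gt n | sigma t = Some k /\ true] = [set t | sigma t = Some k].
    by apply/seteqP; split => t /= [] // ->.
  by rewrite -GE; apply: (Gmono _ _ kn); apply: st.
have -> : [set t : Gt n | sigma t = Some k /\ false] = set0.
  by apply/seteqP; split => t //= [_]; lia.
exact: measurable0.
Qed.


Lemma S0 t : S xi 0 t = 0. Proof. by rewrite /S big_ord0. Qed.
Lemma SS n t : S xi n.+1 t = S xi n t + xi n.+1 t.
Proof. by rewrite /S big_ord_recr. Qed.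

Lemma Lt_meas n : measurable (Lt n).
Proof.
case: n => [|n]; last exact: (Gsub _ _ (Lt_G n)).
have -> : Lt 0 = setT.
  by apply/seteqP; split => t //= _; rewrite /Lt /le_time /=; case: (sigma t).
exact: measurableT.
Qed.

Lemma Ptail n y : P (xi n.+1 @^-1` `]y, +oo[) = (1 - F y)%:E.
Proof.
have -> : xi n.+1 @^-1` `]y, +oo[ = ~` [set t | xi n.+1 t <= y].
  apply/seteqP; split => t /=; rewrite in_itv /= andbT.
    by move=> H; apply/negP; rewrite -ltNge.
  by move/negP; rewrite -ltNge.
rewrite probability_setC; last by apply: mle; exact: xi_meas.
by rewrite cdf.
Qed.

Lemma Pindep n A y : G n A ->
  P (A `&` xi n.+1 @^-1` `]y, +oo[) = (P A * (1 - F y)%:E)%E.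
Proof. by move=> GA; rewrite indep// Ptail. Qed.

Lemma Esigma : (\int[P]_t ext_time sigma t = \sum_(n <oo) P (Lt n.+1))%E.
Proof.
have -> : ext_time (R:=R) sigma = fun t => (\sum_(n <oo) (\1_(Lt n.+1) t)%:E)%E.
  apply: funext => t; rewrite /ext_time.
  case E: (sigma t) => [k|].
    rewrite (nneseries_split 0 k); last by move=> j _; rewrite lee_fin.
    rewrite eseries0 ?adde0; last first.
      move=> j /= kj _; rewrite indicE memNset //=; rewrite /Lt /le_time /= E; lia.
    rewrite add0n sumEFin; congr EFin.
    rewrite (eq_big_nat _ _ (F2 := fun=> 1)) ?sumr_const_nat ?subn0 //.
    by move=> j /andP[_ jk]; rewrite indicE mem_set //= /Lt /le_time /= E.
  have H1 n : \sum_(0 <= j < n) (\1_(Lt j.+1) t)%:E = (n%:R : R)%:E.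
    rewrite sumEFin; congr EFin.
    rewrite (eq_big_nat _ _ (F2 := fun=> 1)) ?sumr_const_nat ?subn0 //.
    by move=> j /andP[_ jk]; rewrite indicE mem_set //= /Lt /le_time /= E.
  apply/esym/cvg_lim => //.
  rewrite (funext H1).
  by apply/cvgenyP.
rewrite integral_nneseries //; last first.
  move=> n; apply/measurable_realfun.measurable_EFinP; exact/measurable_realfun.measurable_indic/Lt_meas.
apply: eq_eseriesr => n _; rewrite integral_indic ?setIT //; exact: Lt_meas.
Qed.


Lemma PE A : measurable A -> P A = (fine (P A))%:E.
Proof. by move=> mA; rewrite fineK // (fin_num_measure P). Qed.

Lemma Pr_le A B : measurable A -> measurable B -> A `<=` B ->
  fine (P A) <= fine (P B).
Proof.
move=> mA mB AB; rewrite -lee_fin -PE // -PE //.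
by apply: le_measure => //; rewrite inE.
Qed.

Definition Aset (h : R -> R) x n := [set t | (S xi n t > x /\
   forall k, (k < n)%N -> S xi k t <= x) /\ le_time n sigma t /\ S xi n.-1 t <= h x].

Lemma AE h x : A_sigma1 xi sigma h x = \bigcup_n Aset h x n.
Proof. by apply/seteqP; split => t /= [n]; [exists n | move=> _; exists n]. Qed.

Lemma Aset_meas h x n : measurable (Aset h x n).
Proof.
have -> : Aset h x n = [set t | x < S xi n t] `&`
   (\bigcap_(k in `I_n) [set t | S xi k t <= x]) `&` Lt n `&`
   [set t | S xi n.-1 t <= h x].
  apply/seteqP; split => t /=.
    by move=> [[H1 H2] [H3 H4]]; do !split => //; move=> k /= kn; apply: H2.
  by move=> [[[H1 H2] H3] H4]; do !split => //; move=> k kn; apply: H2.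
apply: measurableI; last by apply: mle; exact: S_meas.
apply: measurableI; last exact: Lt_meas.
apply: measurableI; first by apply: mlt; exact: S_meas.
by apply: bigcap_measurableType => k _; apply: mle; exact: S_meas.
Qed.

Lemma A_meas h x : measurable (A_sigma1 xi sigma h x).
Proof. by rewrite AE; apply: bigcupT_measurable => n; exact: Aset_meas. Qed.

Lemma A_up h x : 0 <= x ->
  (P (A_sigma1 xi sigma h x) <=
    (\int[P]_t ext_time sigma t) * (1 - F (x - h x))%:E)%E.
Proof.
move=> x0; rewrite Esigma.
set B := fun n => Lt n.+1 `&` xi n.+1 @^-1` `]x - h x, +oo[.
have mB n : measurable (B n).
  apply: measurableI; first exact: Lt_meas.
  have := xi_meas _ (ltn0Sn n) measurableT _ (measurable_itv `]x - h x, +oo[).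
  by rewrite setTI.
apply: (le_trans (measure_sigma_subadditive _ mB (A_meas h x) _)).
  move=> t /=; rewrite /A_sigma1 /=; move=> [[|n] [[H1 H2] [H3 H4]]].
    by move: H1; rewrite S0 ltNge x0.
  exists n => //; split => //=; rewrite in_itv /= andbT.
  move: H1 H4; rewrite SS /=; lra.
rewrite (eq_eseriesr (g := fun n => (P (Lt n.+1) * (1 - F (x - h x))%:E)%E));
  last by move=> n _; rewrite /B /= Pindep //; exact: Lt_G.
rewrite muleC -nneseriesZl //.
by rewrite le_eqVlt; apply/orP; left; apply/eqP; apply: eq_eseriesr => n _; rewrite muleC.
Qed.


Lemma mgt d' (U : measurableType d') (f : U -> R) a :
  measurable_fun setT f -> measurable [set t | f t < a].
Proof.
move=> mf; have := mf measurableT _ (measurable_itv `]-oo, a[); rewrite setTI.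
congr measurable; apply/seteqP; split => t /=; by rewrite in_itv /=.
Qed.

Definition Wk n c := \bigcup_(k in `I_n.+1)
   ([set t | c < S xi k t] `|` [set t | S xi k t < - c]).

Lemma Wk_G n c : G n (Wk n c).
Proof.
rewrite GE; apply: bigcup_measurable => k /= kn.
by apply: measurableU; [apply: mlt | apply: mgt]; apply: S_Gmeas; lia.
Qed.

Lemma Wk_meas n c : measurable (Wk n c).
Proof. exact: (Gsub _ _ (Wk_G n c)). Qed.

Lemma notWk n c t k : ~ Wk n c t -> (k <= n)%N -> - c <= S xi k t <= c.
Proof.
move=> H kn; apply/andP; split; rewrite leNgt; apply/negP => H'; apply: H;
  (exists k; [rewrite /=; lia|]); [by right | by left].
Qed.

Lemma Wk_mono n m c : (n <= m)%N -> Wk n c `<=` Wk m c.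
Proof. by move=> nm t [k /= kn H]; exists k => //=; lia. Qed.

Lemma Wk_anti n c c' : c <= c' -> Wk n c' `<=` Wk n c.
Proof.
move=> cc t [k /= kn [H|H]]; exists k => //; [left|right] => /=; lra.
Qed.

Lemma A_low h N c x : 0 <= c -> c <= x -> c <= h x ->
  \sum_(n < N) fine (P (Lt n.+1 `\` Wk n c)) * (1 - F (x + c)) <=
  fine (P (A_sigma1 xi sigma h x)).
Proof.
move=> c0 cx chx.
set C := fun n => (Lt n.+1 `\` Wk n c) `&` xi n.+1 @^-1` `]x + c, +oo[.
have mC n : measurable (C n).
  apply: measurableI; first by apply: measurableD; [exact: Lt_meas|exact: Wk_meas].
  have := xi_meas _ (ltn0Sn n) measurableT _ (measurable_itv `]x + c, +oo[).
  by rewrite setTI.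
have CA n : C n `<=` Aset h x n.+1.
  move=> t [[H1 H2]] /=; rewrite in_itv /= andbT => H3.
  have := notWk _ _ _ _ H2 (leqnn n); move=> /andP[Hl Hu].
  split; [split|split] => //.
    by rewrite SS; lra.
  move=> k kn; have kn' : (k <= n)%N by lia.
  have /andP[_ Hk] := notWk _ _ _ _ H2 kn'.
  lra.
  by rewrite /=; lra.
have tC : trivIset `I_N C.
  move=> i j _ _ [t [/CA [[Hi1 Hi2] _] /CA [[Hj1 Hj2] _]]].
  case: (ltngtP i j) => // ij.
    have ij' : (i.+1 < j.+1)%N by lia.
    by have := Hj2 _ ij'; rewrite leNgt Hi1.
  have ij' : (j.+1 < i.+1)%N by lia.
  by have := Hi2 _ ij'; rewrite leNgt Hj1.
have -> : \sum_(n < N) fine (P (Lt n.+1 `\` Wk n c)) * (1 - F (x + c)) =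
    fine (P (\big[setU/set0]_(n < N) C n)).
  rewrite measure_semi_additive_ord_I //; last first.
    by apply: bigsetU_measurable => k _; exact: mC.
  have -> : (\sum_(i < N) P (C i) = \sum_(i < N) ((fine (P (Lt i.+1 `\` Wk i c)) *
      (1 - F (x + c)))%:E))%E.
    apply: eq_bigr => i _; rewrite /C Pindep; last first.
      rewrite GE; apply: measurableD; rewrite -GE; [exact: Lt_G| exact: Wk_G].
    rewrite EFinM -PE //; apply: measurableD; [exact: Lt_meas|exact: Wk_meas].
  by rewrite sumEFin.
apply: Pr_le; [by apply: bigsetU_measurable => k _; exact: mC | exact: A_meas|].
rewrite AE => t Ht; have [n _ /CA Hn] := @bigsetU_bigcup T C N t Ht; by exists n.+1.

Qed.


Lemma Dlow n N c : (n <= N)%N ->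
  fine (P (Lt n.+1)) - fine (P (Wk N c)) <= fine (P (Lt n.+1 `\` Wk n c)).
Proof.
move=> nN.
have mL := Lt_meas n.+1; have mW := Wk_meas n c.
have mD : measurable (Lt n.+1 `\` Wk n c) by apply: measurableD.
have mI : measurable (Lt n.+1 `&` Wk n c) by apply: measurableI.
have H : P (Lt n.+1) = (P (Lt n.+1 `\` Wk n c) + P (Lt n.+1 `&` Wk n c))%E.
  exact: measureDI.
 rewrite (PE _ mL) (PE _ mD) (PE _ mI) -EFinD in H; case: H => ->.
have : fine (P (Lt n.+1 `&` Wk n c)) <= fine (P (Wk N c)).
  apply: Pr_le => //; first exact: Wk_meas.
  by move=> t [_ /(Wk_mono _ _ _ nN)].
lra.
Qed.

Lemma bound_S N t : exists c : nat, forall k, (k <= N)%N -> `|S xi k t| <= c%:R.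
Proof.
elim: N => [|N [c Hc]].
  exists (Num.Def.archi_bound `|S xi 0 t|) => k; rewrite leqn0 => /eqP ->.
  exact/ltW/archi_boundP.
exists (maxn c (Num.Def.archi_bound `|S xi N.+1 t|)) => k; rewrite leq_eqVlt.
case/orP => [/eqP ->|kN].
  apply: (le_trans (ltW (archi_boundP _))) => //.
  by rewrite ler_nat leq_maxr.
by apply: (le_trans (Hc _ kN)); rewrite ler_nat leq_maxl.
Qed.

Lemma W_small N (e : R) : 0 < e -> exists c : nat, fine (P (Wk N c.+1%:R)) < e.
Proof.
move=> e0.
set Fs := fun c : nat => Wk N c.+1%:R.
have mF c : measurable (Fs c) by exact: Wk_meas.
have ni : nonincreasing_seq Fs.
  by move=> m n mn; apply/asboolP; apply: Wk_anti; rewrite ler_nat.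
have cap0 : \bigcap_n Fs n = set0.
  apply/seteqP; split => t //= Ht.
  have [c Hc] := bound_S N t.
  have [k /= kN Hk] := Ht c I.
  have := Hc _ kN; rewrite ler_norml => /andP[H1 H2].
  have : (c%:R : R) < c.+1%:R by rewrite ltr_nat.
  by case: Hk => /= Hk; lra.
have F0 : (P (Fs 0%N) < +oo)%E by rewrite -ge0_fin_numE // (fin_num_measure P).
have H := @nonincreasing_cvg_mu _ _ _ P Fs F0 mF
  (bigcapT_measurable mF) ni.
rewrite cap0 measure0 in H.
have [_ Hf] := (fine_cvgP _ 0).1 H.
have [c0 _ Hc] := (cvgrPdist_lt _ _).1 Hf e e0.
exists c0; have := Hc c0 (leqnn _); rewrite /= sub0r normrN.
exact: le_lt_trans (ler_norm _).
Qed.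


Lemma Esum_fin : (\int[P]_t ext_time sigma t < +oo)%E ->
  (\int[P]_t ext_time sigma t)%E = (fine (\int[P]_t ext_time sigma t)%E)%:E /\
  0 <= fine (\int[P]_t ext_time sigma t)%E.
Proof.
move=> Hlt.
have H0 : (0 <= \int[P]_t ext_time sigma t)%E.
  by apply: integral_ge0 => t _; rewrite /ext_time; case: (sigma t).
split; first by rewrite fineK // ge0_fin_numE.
by apply: fine_ge0.
Qed.

Lemma exN (E e : R) : (\int[P]_t ext_time sigma t)%E = E%:E -> 0 < e ->
  exists N, E - e < \sum_(n < N) fine (P (Lt n.+1)).
Proof.
move=> HE e0.
have Hsup : (\sum_(n <oo) P (Lt n.+1) =
    ereal_sup (range (fun n => \sum_(0 <= i < n | true) P (Lt i.+1))))%E.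
  apply/cvg_lim => //; apply: ereal_nondecreasing_cvgn.
  by apply: ereal_nondecreasing_series => n _ _; exact: measure_ge0.
have : ((E - e)%:E < ereal_sup (range (fun n => \sum_(0 <= i < n | true) P (Lt i.+1))))%E.
  by rewrite -Hsup -Esigma HE lte_fin; lra.
move=> /ereal_sup_gt [y [N _ <-]] HN; exists N.
rewrite -lte_fin; apply: (lt_le_trans HN).
rewrite big_mkord -sumEFin le_eqVlt; apply/orP; left; apply/eqP.
by apply: eq_bigr => i _; rewrite -PE //; exact: Lt_meas.
Qed.

Lemma main (h : R -> R) :
  (forall x, 0 < 1 - F x) ->
  (forall c, 0 < c -> (fun x => (1 - F (x - c)) / (1 - F x)) x @[x --> +oo] --> (1:R)) ->
  h x @[x --> +oo] --> +oo ->
  (fun x => (1 - F (x - h x)) / (1 - F x)) x @[x --> +oo] --> (1:R) ->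
  (\int[P]_t ext_time sigma t < +oo)%E ->
  (fun x => fine (P (A_sigma1 xi sigma h x)) / (1 - F x)) x @[x --> +oo]
    --> fine (\int[P]_t ext_time sigma t)%E.
Proof.
move=> Fpos LT hinf h3 Efin.
have [HE E0] := Esum_fin Efin.
move: HE E0; set E := fine _ => HE E0.
apply/cvgrPdist_lt => e e0.
have e4 : 0 < e / 4 by lra.
have [N HN] := exN _ _ HE e4.
have dpos : 0 < e / (4 * (N%:R + 1)).
  by apply: divr_gt0 => //; apply: mulr_gt0 => //; apply: ltr_wpDl.
have [c Hc] := W_small N _ dpos.
set cc : R := c.+1%:R.
set w := fine (P (Wk N cc)).
have cc0 : 0 < cc by rewrite /cc ltr0n.
have Nw : N%:R * w < e / 4.
  have w0 : 0 <= w by apply: fine_ge0; exact: measure_ge0.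
  have N0 : (0 : R) <= N%:R by rewrite ler0n.
  move: Hc; rewrite -/cc -/w ltr_pdivlMr; last first.
    by apply: mulr_gt0 => //; apply: ltr_wpDl.
  nra.
have Hr1 : (fun x => E * ((1 - F (x - h x)) / (1 - F x))) x @[x --> +oo] --> E.
  by have := cvgM (cvg_cst E) h3; rewrite mulr1 => H; exact: H.
have Hr2 : (fun x => (E - e / 2) * ((1 - F (x + cc)) / (1 - F x))) x @[x --> +oo]
     --> E - e / 2.
  have := shift_cvg _ _ cc _ (LT cc cc0) => H.
  have H' : (fun x => ((1 - F (x + cc - cc)) / (1 - F (x + cc)))^-1) x
      @[x --> +oo] --> (1 : R).
    rewrite -[X in _ --> X]invr1; apply: cvgV => //; exact: oner_neq0.
  have := cvgM (cvg_cst (E - e / 2)) H'; rewrite mulr1.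
  suff -> : (fun x => (E - e / 2) * ((1 - F (x + cc)) / (1 - F x))) =
    ((fun=> E - e / 2) \* fun x => ((1 - F (x + cc - cc)) / (1 - F (x + cc)))^-1).
    by move=> H2; exact: H2.
  by apply: funext => x /=; rewrite addrK invf_div.
have H1 := (cvgrPdist_lt _ _).1 Hr1 e e0.
have H2 := (cvgrPdist_lt _ _).1 Hr2 (e / 2) (ltac:(lra)).
near=> x.
have xc : cc <= x by near: x; apply: nbhs_pinfty_ge; exact: num_real.
have hc : cc <= h x by near: x; move: hinf => /cvgryPge; apply.
have x0 : 0 <= x by lra.
have fb0 := Fpos x.
have up := A_up h x x0.
rewrite HE -EFinM (PE _ (A_meas h x)) lee_fin in up.
have low := A_low h N cc x (ltW cc0) xc hc.
have Hup : fine (P (A_sigma1 xi sigma h x)) / (1 - F x) <=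
    E * ((1 - F (x - h x)) / (1 - F x)).
  by rewrite mulrA; apply: ler_wpM2r => //; rewrite invr_ge0 ltW.
have Hsum : (\sum_(n < N) fine (P (Lt n.+1)) - N%:R * w) * (1 - F (x + cc)) <=
    \sum_(n < N) fine (P (Lt n.+1 `\` Wk n cc)) * (1 - F (x + cc)).
  have -> : \sum_(n < N) fine (P (Lt n.+1)) - N%:R * w =
      \sum_(n < N) (fine (P (Lt n.+1)) - w).
    by rewrite sumrB sumr_const card_ord mulr_natl.
  rewrite mulr_suml.
  apply: ler_sum => -[n /= nN] _; apply: ler_wpM2r; first exact: ltW.
  by apply: Dlow; exact: ltnW.
have Hlow : (E - e / 2) * ((1 - F (x + cc)) / (1 - F x)) <=
    fine (P (A_sigma1 xi sigma h x)) / (1 - F x).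
  rewrite mulrA; apply: ler_wpM2r; first by rewrite invr_ge0 ltW.
  apply: le_trans low; apply: le_trans Hsum.
  apply: ler_wpM2r; first exact: ltW (Fpos _).
  lra.
have K1 : `|E - E * ((1 - F (x - h x)) / (1 - F x))| < e by near: x; exact: H1.
have K2 : `|E - e / 2 - (E - e / 2) * ((1 - F (x + cc)) / (1 - F x))| < e / 2
  by near: x; exact: H2.
move: K1 K2; rewrite !ltr_norml => /andP[K1 K1'] /andP[K2 K2'].
apply/andP; split; lra.
Unshelve. all: by end_near.
Qed.

End S.

Theorem lemma1 (d : measure_display) (T : measurableType d) (R : realType)
  (P : probability T R) (xi : nat -> T -> R) (F : R -> R)
  (G : nat -> set (set T)) (sigma : T -> option nat) (h : R -> R) :
  (* i.i.d. with common distribution function F *)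
  mutually_independent P xi ->
  common_cdf P xi F ->
  (* finite negative mean *)
  P.-integrable setT (EFin \o xi 1%N) ->
  (\int[P]_t (xi 1%N t)%:E < 0)%E ->
  (* F long-tailed *)
  (forall x, 0 < 1 - F x) ->
  (forall c, 0 < c ->
     (fun x => (1 - F (x - c)) / (1 - F x)) x @[x --> +oo] --> (1:R)) ->
  (* h : R_+ -> R_+ with (h1)-(h4) *)
  (forall x, 0 <= x -> 0 <= h x) ->
  (forall x, 0 <= x -> h x <= x / 2) ->
  h x @[x --> +oo] --> +oo ->
  (fun x => (1 - F (x - h x)) / (1 - F x)) x @[x --> +oo] --> (1:R) ->
  (exists x0, 0 <= x0 /\ forall x t, x0 <= x -> 0 <= t -> h (x + t) <= h x + t) ->
  (* sigma a stopping time w.r.t. an admissible filtration, E sigma < oo *)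
  admissible P xi G ->
  stopping_time G sigma ->
  (\int[P]_t ext_time sigma t < +oo)%E ->
  (fun x => fine (P (A_sigma1 xi sigma h x)) / (1 - F x)) x @[x --> +oo]
    --> fine (\int[P]_t ext_time sigma t).
Proof.
move=> _ cdf _ _ Fpos LT _ _ hinf h3 _ adm st Efin.
exact: (@main d T R P xi F G sigma cdf adm st h Fpos LT hinf h3 Efin).
Qed.
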